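(* Assume $T\ge 3$. For every $z_k\in Z_\theta$ and every $t=0,1,\dots,T-3$, $\bar\epsilon_t(z_k)\le U^\epsilon_t(z_k)\le\bar U^\epsilon_t(\theta)$, where $$U^\epsilon_t(z_k)=\alpha^{T-1-t}\gamma_{T-1}\theta+2\theta\sum_{i=0}^{T-3-t}\sum_{n=1}^{T-1-t-i}\alpha^{n+i}\gamma_{t+i+n}\prod_{m=0}^{n-1}F_{t+i+m}\big(\max(\lambda_t(i),S_{t+i})+(m+1)\theta-s_{t+i+m+1}\big),$$ $$\bar U^\epsilon_t(\theta)=\alpha^{T-1-t}\gamma_{T-1}\theta+2\theta\sum_{i=0}^{T-3-t}\sum_{n=1}^{T-1-t-i}\alpha^{n+i}\gamma_{t+i+n}.$$
   Context: Model. Fix an integer horizon $T$, a discount factor $\alpha\in(0,1]$, and for $t=0,\dots,T-1$: unit ordering costs $c_t\in\mathbb R$, a salvage coefficient $c_T\in\mathbb R$, setup costs $K_t\ge 0$, functions $G_t:\mathbb R\to\mathbb R$, and independent nonnegative random demands $D_0,\dots,D_{T-1}$ with right-continuous distribution functions $F_t$ and finite means; all expectations appearing are assumed finite. Put $C_t(y)=(c_t-\alpha c_{t+1})y+G_t(y)+\alpha c_{t+1}E[D_t]$. Standing assumptions: (i) each $C_t$ is convex with $C_t(y)\to+\infty$ as $|y|\to\infty$; (ii) $K_t\ge \alpha K_{t+1}$ for $t=0,\dots,T-2$; (iii) there are constants $\gamma_t\ge 0$ with $|C_t(x)-C_t(y)|\le\gamma_t|x-y|$ for all $x,y$. Grid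 construction. Fix $\theta>0$, $z_m=m\theta$, $Z_\theta=\{z_m:m\in\mathbb Z\}$, $f_t(n)=F_t(z_{n+1})-F_t(z_n)$ ($n\ge -1$). $C^m_t=\min\{y: C_t(y)=\min_x C_t(x)\}$; with $z_{n_0}<C^m_t\le z_{n_0+1}$, $S^U_t=\min\{z_m\in Z_\theta: z_m\ge C^m_t,\ C_t(z_m)>C_t(z_{n_0})+K_t\}$. $s_{T-1}$ is a point with $s_{T-1}\le C^m_{T-1}$, $C_{T-1}(s_{T-1})=C_{T-1}(C^m_{T-1})+K_{T-1}$; $\bar I_{T-1}=s_{T-1}$. For $t=T-2,\dots,0$: $I_t=\max\{z_m\in Z_\theta: z_m<\min(\bar I_{t+1}-\theta,C^m_t)\}$, $\bar I_t=\max\{z_m\in Z_\theta: z_m\le I_t,\ C_t(z_m)>C_t(I_t)+K_t\}+\theta$. $H_{T-1}=C_{T-1}$, $S_{T-1}=C^m_{T-1}$; $V_t(y)=H_t(S_t)+K_t$ for $y<s_t$, $V_t(y)=H_t(y)$ for $y\ge s_t$. For $t=T-2,\dots,0$: $H_t(y)=C_t(y)+\alpha\sum_{n=-1}^\infty V_{t+1}(y-z_n)f_t(n)$; $S_t=\max\{z_m\in Z_\theta: I_t\le z_m\le S^U_t,\ H_t(z_m)=\min\{H_t(z_n):z_n\in Z_\theta, I_t\le z_n\le S^U_t\}\}$; $s_t=S_t$ if $K_t=0$, else $s_t=\min\{z_m\in Z_\theta:\bar I_t\le z_m\le S_t,\ H_t(z_m)\le H_t(S_t)+K_t\}$. Upper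 estimate functions. $\bar\psi_{T-1}(x,y)=\gamma_{T-1}x$; $\bar\varphi_{T-1}(x,y)=0$ if $y<s_{T-1}$ and $=\gamma_{T-1}x$ if $y\ge s_{T-1}$. For $t=0,\dots,T-2$, with $n$ the integer such that $z_{n-1}\le y-s_{t+1}<z_n$: $\bar\psi_t(x,y)=\gamma_tx$ if $y<s_{t+1}-\theta$, else $\bar\psi_t(x,y)=\gamma_tx+\alpha\sum_{m=-1}^{n-1}\bar\varphi_{t+1}(x,y-z_m)f_t(m)$; $\bar\varphi_t(x,y)=0$ if $y<s_t$, $=\bar\psi_t(y-s_t+\theta,y)$ if $y\ge s_t$ and $y-x<s_t$, $=\bar\psi_t(x,y)$ if $y\ge s_t$ and $y-x\ge s_t$. Bound $\bar\epsilon$. For $z_k\in Z_\theta$: $\bar\epsilon_{T-2}(z_k)=\alpha\gamma_{T-1}\theta$, and for $t=0,\dots,T-3$, $\bar\epsilon_t(z_k)=\alpha^{T-1-t}\gamma_{T-1}\theta+\sum_{i=0}^{T-3-t}2\alpha^i\big[\bar\psi_{t+i}(\theta,\max(\lambda_t(i),S_{t+i}))-\gamma_{t+i}\theta\big]$, where $\lambda_t(0)=z_k$ and $\lambda_t(i)=\max(\lambda_t(i-1),S_{t+i-1})+\theta$ for $i=1,\dots,T-3-t$. *)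

(* Defs.v *)
From Stdlib Require Import Reals Lra ZArith List ClassicalEpsilon.
From Coquelicot Require Import Coquelicot.
Open Scope R_scope.

(* Primitive data of the model.
   hor = T, alp = alpha, cc t = c_t (cc T = salvage c_T), KK t = K_t,
   GG t = G_t, FF t = distribution function F_t of D_t,
   ED t = E[D_t], gam t = gamma_t. *)
Record model := Model {
  hor : nat; alp : R; cc : nat -> R; KK : nat -> R; GG : nat -> R -> R;
  FF : nat -> R -> R; ED : nat -> R; gam : nat -> R }.

Definition sumZ (a b : Z) (g : Z -> R) : R :=
  fold_right Rplus 0 (map (fun j => g (a + Z.of_nat j)%Z) (seq 0 (Z.to_nat (b - a + 1)))).
Definition sumN (a b : nat) (g : nat -> R) : R :=
  fold_right Rplus 0 (map g (seq a (S b - a))).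
Definition prodN (a b : nat) (g : nat -> R) : R :=
  fold_right Rmult 1 (map g (seq a (S b - a))).

Definition minZ (P : Z -> Prop) : Z :=
  epsilon (inhabits 0%Z) (fun m => P m /\ forall n, P n -> (m <= n)%Z).
Definition maxZ (P : Z -> Prop) : Z :=
  epsilon (inhabits 0%Z) (fun m => P m /\ forall n, P n -> (n <= m)%Z).

Definition Cfun (M : model) (t : nat) (y : R) : R :=
  (cc M t - alp M * cc M (S t)) * y + GG M t y + alp M * cc M (S t) * ED M t.

Definition Cm (M : model) (t : nat) : R :=
  epsilon (inhabits 0) (fun y => (forall x, Cfun M t y <= Cfun M t x) /\
     forall y', (forall x, Cfun M t y' <= Cfun M t x) -> y <= y').

Record stage := Stage { sH : R -> R; sS : R; ss : R; sIb : R }.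

Definition Vof (st : stage) (Kt : R) (y : R) : R :=
  if Rlt_dec y (ss st) then sH st (sS st) + Kt else sH st y.

Section Grid.
Variable M : model.
Variable theta : R.
Variable sT1 : R.

Definition z (m : Z) : R := IZR m * theta.

Definition f (t : nat) (n : Z) : R := FF M t (z (n + 1)) - FF M t (z n).

Definition n0 (t : nat) : Z :=
  epsilon (inhabits 0%Z) (fun n => z n < Cm M t <= z (n + 1)).

Definition SU (t : nat) : R :=
  z (minZ (fun m => Cm M t <= z m /\ Cfun M t (z m) > Cfun M t (z (n0 t)) + KK M t)).

(* stageK k holds (H_t, S_t, s_t, Ibar_t) for t = T-1-k *)
Fixpoint stageK (k : nat) : stage :=
  match k with
  | O => Stage (Cfun M (hor M - 1)) (Cm M (hor M - 1)) sT1 sT1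
  | S k' =>
    let nx := stageK k' in
    let t := (hor M - 2 - k')%nat in
    let V := Vof nx (KK M (S t)) in
    let H := fun y => Cfun M t y +
       alp M * Series (fun j => V (y - z (Z.of_nat j - 1)) * f t (Z.of_nat j - 1)) in
    let I := z (maxZ (fun m => z m < Rmin (sIb nx - theta) (Cm M t))) in
    let Ib := z (maxZ (fun m => z m <= I /\ Cfun M t (z m) > Cfun M t I + KK M t)) + theta in
    let St := z (maxZ (fun m => I <= z m <= SU t /\
                  forall n, I <= z n <= SU t -> H (z m) <= H (z n))) in
    let st := if Req_EM_T (KK M t) 0 then St
              else z (minZ (fun m => Ib <= z m <= St /\ H (z m) <= H St + KK M t)) in
    Stage H St st Ib
  end.

Definition stg (t : nat) : stage := stageK (hor M - 1 - t).
Definition Hf (t : nat) : R -> R := sH (stg t).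
Definition Sx (t : nat) : R := sS (stg t).
Definition sx (t : nat) : R := ss (stg t).
Definition Ibar (t : nat) : R := sIb (stg t).
Definition Vf (t : nat) : R -> R := Vof (stg t) (KK M t).

Definition nidx (y s : R) : Z :=
  epsilon (inhabits 0%Z) (fun n => z (n - 1) <= y - s < z n).

(* ppK k = (psibar_t, phibar_t) for t = T-1-k *)
Fixpoint ppK (k : nat) : (R -> R -> R) * (R -> R -> R) :=
  match k with
  | O => (fun x _ => gam M (hor M - 1) * x,
          fun x y => if Rlt_dec y (sx (hor M - 1)) then 0 else gam M (hor M - 1) * x)
  | S k' =>
    let t := (hor M - 2 - k')%nat in
    let phi1 := snd (ppK k') in
    let psi := fun x y =>
      if Rlt_dec y (sx (S t) - theta) then gam M t * x
      else gam M t * x + alp M *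
        sumZ (-1) (nidx y (sx (S t)) - 1) (fun m => phi1 x (y - z m) * f t m) in
    let phi := fun x y =>
      if Rlt_dec y (sx t) then 0
      else if Rlt_dec (y - x) (sx t) then psi (y - sx t + theta) y
      else psi x y in
    (psi, phi)
  end.

Definition psibar (t : nat) : R -> R -> R := fst (ppK (hor M - 1 - t)).
Definition phibar (t : nat) : R -> R -> R := snd (ppK (hor M - 1 - t)).

Fixpoint lam (t : nat) (x : R) (i : nat) : R :=
  match i with
  | O => x
  | S i' => Rmax (lam t x i') (Sx (t + i')) + theta
  end.

Definition epsbar (t : nat) (x : R) : R :=
  if Nat.eqb t (hor M - 2) then alp M * gam M (hor M - 1) * theta
  else alp M ^ (hor M - 1 - t) * gam M (hor M - 1) * theta +
    sumN 0 (hor M - 3 - t) (fun i =>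
      2 * alp M ^ i * (psibar (t + i) theta (Rmax (lam t x i) (Sx (t + i)))
                       - gam M (t + i) * theta)).

Definition Ueps (t : nat) (x : R) : R :=
  alp M ^ (hor M - 1 - t) * gam M (hor M - 1) * theta +
  2 * theta * sumN 0 (hor M - 3 - t) (fun i =>
    sumN 1 (hor M - 1 - t - i) (fun n =>
      alp M ^ (n + i) * gam M (t + i + n) *
      prodN 0 (n - 1) (fun m =>
        FF M (t + i + m) (Rmax (lam t x i) (Sx (t + i)) + INR (m + 1) * theta
                          - sx (t + i + m + 1))))).

End Grid.

Definition Ubar (M : model) (theta : R) (t : nat) : R :=
  alp M ^ (hor M - 1 - t) * gam M (hor M - 1) * theta +
  2 * theta * sumN 0 (hor M - 3 - t) (fun i =>
    sumN 1 (hor M - 1 - t - i) (fun n => alp M ^ (n + i) * gam M (t + i + n))).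

Definition is_cdf_nonneg (Fd : R -> R) : Prop :=
  (forall x y, x <= y -> Fd x <= Fd y) /\
  (forall x, filterlim Fd (at_right x) (locally (Fd x))) /\
  is_lim Fd p_infty (Finite 1) /\
  (forall x, x < 0 -> Fd x = 0).

Definition convex_fun (g : R -> R) : Prop :=
  forall x y l, 0 <= l <= 1 -> g (l * x + (1 - l) * y) <= l * g x + (1 - l) * g y.

Definition standing (M : model) (theta : R) : Prop :=
  0 < alp M <= 1 /\ 0 < theta /\
  (forall t, (t < hor M)%nat -> 0 <= KK M t) /\
  (* F_t is the cdf of the nonnegative demand D_t, and ED t = E[D_t] is finite *)
  (forall t, (t < hor M)%nat -> is_cdf_nonneg (FF M t) /\
      is_RInt_gen (fun x => 1 - FF M t x) (at_point 0) (Rbar_locally p_infty) (ED M t)) /\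
  (forall t, (t < hor M)%nat -> convex_fun (Cfun M t) /\
      is_lim (Cfun M t) p_infty p_infty /\ is_lim (Cfun M t) m_infty p_infty) /\
  (forall t, (t + 2 <= hor M)%nat -> KK M t >= alp M * KK M (S t)) /\
  (forall t, (t < hor M)%nat -> 0 <= gam M t /\
      forall x y, Rabs (Cfun M t x - Cfun M t y) <= gam M t * Rabs (x - y)).

Definition sT1_ok (M : model) (sT1 : R) : Prop :=
  sT1 <= Cm M (hor M - 1) /\
  Cfun M (hor M - 1) sT1 = Cfun M (hor M - 1) (Cm M (hor M - 1)) + KK M (hor M - 1).

Definition expectations_finite (M : model) (theta sT1 : R) : Prop :=
  forall t, (S t < hor M)%nat -> forall y,
    ex_series (fun j => Rabs (Vf M theta sT1 (S t) (y - z theta (Z.of_nat j - 1))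
                              * f M theta t (Z.of_nat j - 1))).

(* Main.v *)
Require Import Defs.
From Stdlib Require Import Reals ZArith Lra Lia List ClassicalEpsilon.
From Coquelicot Require Import Coquelicot.
Open Scope R_scope.

Definition lsum (l : list R) := fold_right Rplus 0 l.
Definition lprod (l : list R) := fold_right Rmult 1 l.

Lemma lsum_le {A} (g1 g2 : A -> R) l :
  (forall x, In x l -> g1 x <= g2 x) ->
  fold_right Rplus 0 (map g1 l) <= fold_right Rplus 0 (map g2 l).
Proof.
  induction l as [|a l IH]; simpl; intros H; [lra|].
  apply Rplus_le_compat; [apply H; auto| apply IH; intros; apply H; auto].
Qed.

Lemma lsum_scal {A} (c : R) (g : A -> R) l :
  fold_right Rplus 0 (map (fun x => c * g x) l) = c * fold_right Rplus 0 (map g l).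
Proof. induction l; simpl; [ring| rewrite IHl; ring]. Qed.

Lemma lsum_ext {A} (g1 g2 : A -> R) l :
  (forall x, In x l -> g1 x = g2 x) ->
  fold_right Rplus 0 (map g1 l) = fold_right Rplus 0 (map g2 l).
Proof.
  induction l as [|a l IH]; simpl; intros H; [lra|].
  rewrite H by auto. rewrite IH; auto.
Qed.

Lemma lprod_ext {A} (g1 g2 : A -> R) l :
  (forall x, In x l -> g1 x = g2 x) ->
  fold_right Rmult 1 (map g1 l) = fold_right Rmult 1 (map g2 l).
Proof.
  induction l as [|a l IH]; simpl; intros H; [lra|].
  rewrite H by auto. rewrite IH; auto.
Qed.

Lemma lprod_le {A} (g1 g2 : A -> R) l :
  (forall x, In x l -> 0 <= g1 x <= g2 x) ->
  0 <= fold_right Rmult 1 (map g1 l) <= fold_right Rmult 1 (map g2 l).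
Proof.
  induction l as [|a l IH]; simpl; intros H; [lra|].
  destruct (H a (or_introl eq_refl)).
  destruct IH as [IH1 IH2]; [intros; apply H; auto|].
  split; [apply Rmult_le_pos; auto|]. apply Rmult_le_compat; auto.
Qed.

Lemma lprod_le1 {A} (g : A -> R) l :
  (forall x, In x l -> 0 <= g x <= 1) ->
  fold_right Rmult 1 (map g l) <= 1.
Proof.
  induction l as [|a l IH]; simpl; intros H; [lra|].
  destruct (H a (or_introl eq_refl)).
  assert (fold_right Rmult 1 (map g l) <= 1) by (apply IH; intros; apply H; auto).
  assert (0 <= fold_right Rmult 1 (map g l)).
  { clear - H. induction l; simpl; [lra|]. apply Rmult_le_pos.
    apply H; simpl; auto. apply IHl; intros; apply H; simpl in *; tauto. }
  nra.
Qed.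

Lemma map_shift {A} (G : nat -> A) a n :
  map G (seq (S a) n) = map (fun j => G (S j)) (seq a n).
Proof. rewrite <- seq_shift, map_map. reflexivity. Qed.

Lemma sumN_le (a b : nat) g1 g2 :
  (forall n, (a <= n <= b)%nat -> g1 n <= g2 n) -> sumN a b g1 <= sumN a b g2.
Proof. intros H; unfold sumN; apply lsum_le; intros x Hx; apply in_seq in Hx; apply H; lia. Qed.

Lemma sumN_ext (a b : nat) g1 g2 :
  (forall n, (a <= n <= b)%nat -> g1 n = g2 n) -> sumN a b g1 = sumN a b g2.
Proof. intros H; unfold sumN; apply lsum_ext; intros x Hx; apply in_seq in Hx; apply H; lia. Qed.

Lemma sumN_scal a b c g : sumN a b (fun n => c * g n) = c * sumN a b g.
Proof. unfold sumN; apply lsum_scal. Qed.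

Lemma sumN_nonneg a b g : (forall n, (a <= n <= b)%nat -> 0 <= g n) -> 0 <= sumN a b g.
Proof.
  intros H. assert (E: sumN a b (fun _ => 0) = 0).
  { unfold sumN. induction (seq a (S b - a)); simpl; [ring| rewrite IHl; ring]. }
  rewrite <- E. apply sumN_le; auto.
Qed.

Lemma sumN_1S b G : sumN 1 (S b) G = G 1%nat + sumN 1 b (fun n => G (S n)).
Proof.
  unfold sumN. replace (S (S b) - 1)%nat with (S b) by lia.
  replace (S b - 1)%nat with b by lia. simpl. rewrite map_shift. reflexivity.
Qed.

Lemma prodN_0S n H : prodN 0 (S n) H = H 0%nat * prodN 0 n (fun m => H (S m)).
Proof.
  unfold prodN. replace (S (S n) - 0)%nat with (S (S n)) by lia.
  replace (S n - 0)%nat with (S n) by lia. simpl. rewrite map_shift. reflexivity.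
Qed.

Lemma prodN_00 H : prodN 0 0 H = H 0%nat.
Proof. unfold prodN. simpl. ring. Qed.

Lemma prodN_ext n H1 H2 : (forall m, (m <= n)%nat -> H1 m = H2 m) -> prodN 0 n H1 = prodN 0 n H2.
Proof. intros H; unfold prodN; apply lprod_ext; intros x Hx; apply in_seq in Hx; apply H; lia. Qed.

Lemma prodN_le n H1 H2 : (forall m, (m <= n)%nat -> 0 <= H1 m <= H2 m) ->
   0 <= prodN 0 n H1 <= prodN 0 n H2.
Proof. intros H; unfold prodN; apply lprod_le; intros x Hx; apply in_seq in Hx; apply H; lia. Qed.

Lemma prodN_le1 n H1 : (forall m, (m <= n)%nat -> 0 <= H1 m <= 1) -> prodN 0 n H1 <= 1.
Proof. intros H; unfold prodN; apply lprod_le1; intros x Hx; apply in_seq in Hx; apply H; lia. Qed.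

Lemma sumZ_le a b g1 g2 : (forall m, (a <= m)%Z -> g1 m <= g2 m) -> sumZ a b g1 <= sumZ a b g2.
Proof. intros H; unfold sumZ; apply lsum_le; intros; apply H; lia. Qed.

Lemma sumZ_scal a b c g : sumZ a b (fun m => c * g m) = c * sumZ a b g.
Proof. unfold sumZ. apply (lsum_scal c (fun j => g (a + Z.of_nat j)%Z)). Qed.

Lemma tele (Hf : Z -> R) N : forall a,
  fold_right Rplus 0 (map (fun j => Hf (a + Z.of_nat j + 1)%Z - Hf (a + Z.of_nat j)%Z) (seq 0 N))
  = Hf (a + Z.of_nat N)%Z - Hf a.
Proof.
  induction N as [|N IH]; intros a; simpl.
  - replace (a+0)%Z with a by lia. ring.
  - rewrite map_shift.
    rewrite (map_ext _ (fun j => Hf ((a+1) + Z.of_nat j + 1)%Z - Hf ((a+1) + Z.of_nat j)%Z)).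
    2:{ intros j. rewrite Nat2Z.inj_succ. f_equal; f_equal; lia. }
    rewrite IH. replace (a + 1 + Z.of_nat N)%Z with (a + Z.pos (Pos.of_succ_nat N))%Z by lia.
    replace (a+0+1)%Z with (a+1)%Z by lia. replace (a+0)%Z with a by lia. ring.
Qed.

Lemma sumZ_tele (Hf : Z -> R) n : (0 <= n)%Z ->
  sumZ (-1) (n - 1) (fun m => Hf (m + 1)%Z - Hf m) = Hf n - Hf (-1)%Z.
Proof.
  intros Hn. unfold sumZ. rewrite tele. f_equal. f_equal. lia.
Qed.

Definition isg th y := exists j, y = z th j.

Lemma sx_grid M th s t : (t + 2 <= hor M)%nat -> isg th (sx M th s t).
Proof.
  intros Ht. unfold sx, stg. replace (hor M - 1 - t)%nat with (S (hor M - 2 - t)) by lia.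
  cbn [stageK ss]. cbv zeta. destruct (Req_EM_T _ _); eexists; reflexivity.
Qed.

Lemma Sx_grid M th s t : (t + 2 <= hor M)%nat -> isg th (Sx M th s t).
Proof.
  intros Ht. unfold Sx, stg. replace (hor M - 1 - t)%nat with (S (hor M - 2 - t)) by lia.
  cbn [stageK sS]. eexists; reflexivity.
Qed.

Lemma psibar_eq M th s t x y : (t + 2 <= hor M)%nat ->
  psibar M th s t x y =
  if Rlt_dec y (sx M th s (S t) - th) then gam M t * x
  else gam M t * x + alp M *
    sumZ (-1) (nidx th y (sx M th s (S t)) - 1)
      (fun m => phibar M th s (S t) x (y - z th m) * Defs.f M th t m).
Proof.
  intros Ht. unfold psibar, phibar.
  replace (hor M - 1 - t)%nat with (S (hor M - 2 - t)) by lia.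
  replace (hor M - 1 - S t)%nat with (hor M - 2 - t)%nat by lia.
  cbn [ppK fst snd].
  replace (hor M - 2 - (hor M - 2 - t))%nat with t by lia. reflexivity.
Qed.

Lemma phibar_eq M th s t x y : (t + 2 <= hor M)%nat ->
  phibar M th s t x y =
  if Rlt_dec y (sx M th s t) then 0
  else if Rlt_dec (y - x) (sx M th s t) then psibar M th s t (y - sx M th s t + th) y
  else psibar M th s t x y.
Proof.
  intros Ht. unfold psibar, phibar.
  replace (hor M - 1 - t)%nat with (S (hor M - 2 - t)) by lia.
  cbn [ppK fst snd].
  replace (hor M - 2 - (hor M - 2 - t))%nat with t by lia. reflexivity.
Qed.

Lemma phibar_last M th s x y :
  phibar M th s (hor M - 1) x y =
  if Rlt_dec y (sx M th s (hor M - 1)) then 0 else gam M (hor M - 1) * x.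
Proof.
  unfold phibar. replace (hor M - 1 - (hor M - 1))%nat with 0%nat by lia. reflexivity.
Qed.

Lemma cdf_mono Fd : is_cdf_nonneg Fd -> forall x y, x <= y -> Fd x <= Fd y.
Proof. intros [H _]; exact H. Qed.

Lemma cdf_bounds Fd : is_cdf_nonneg Fd -> forall x, 0 <= Fd x <= 1.
Proof.
  intros HF x. destruct HF as [Hm [_ [Hl Hn]]]. split.
  - destruct (Rlt_dec x 0). rewrite Hn; lra.
    rewrite <- (Hn (-1)) by lra. apply Hm; lra.
  - assert (Rbar_le (Fd x) 1).
    { apply (is_lim_le_loc (fun _ => Fd x) Fd p_infty).
      exists x. intros y Hy. apply Hm; lra.
      apply is_lim_const. exact Hl. }
    simpl in H. exact H.
Qed.

Lemma z_sub th a b : z th a - z th b = z th (a - b).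
Proof. unfold z. rewrite minus_IZR. ring. Qed.

Lemma z_add1 th a : z th (a + 1) = z th a + th.
Proof. unfold z. rewrite plus_IZR. simpl. ring. Qed.

Lemma grid_eq th a b : 0 < th -> z th a <= z th b < z th a + th -> z th b = z th a.
Proof.
  intros Hth [H1 H2]. unfold z in *.
  assert (IZR a <= IZR b) by (apply Rmult_le_reg_r with th; lra).
  assert (IZR b < IZR a + 1).
  { apply Rmult_lt_reg_r with th; lra. }
  rewrite <- plus_IZR in H0. apply le_IZR in H. apply lt_IZR in H0.
  replace b with a by lia. reflexivity.
Qed.

Lemma nidx_spec th y s : 0 < th ->
  z th (nidx th y s - 1) <= y - s < z th (nidx th y s).
Proof.
  intros Hth. unfold nidx. apply epsilon_spec.
  exists (up ((y - s) / th)). destruct (archimed ((y - s)/th)) as [A1 A2].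
  unfold z. rewrite minus_IZR. simpl. split.
  - apply Rmult_le_reg_r with (/ th). apply Rinv_0_lt_compat; lra.
    rewrite Rmult_assoc, Rinv_r by lra. unfold Rdiv in *. lra.
  - apply Rmult_lt_reg_r with (/ th). apply Rinv_0_lt_compat; lra.
    rewrite Rmult_assoc, Rinv_r by lra. unfold Rdiv in *. lra.
Qed.

Definition Bd M th s t y :=
  gam M t * th + th * sumN 1 (hor M - 1 - t) (fun n => alp M ^ n * gam M (t + n) *
    prodN 0 (n - 1) (fun m => FF M (t + m) (y + INR (m + 1) * th - sx M th s (t + m + 1)))).

Lemma st_F M th : standing M th -> forall t, (t < hor M)%nat -> is_cdf_nonneg (FF M t).
Proof. intros H t Ht. apply (proj1 (proj1 (proj2 (proj2 (proj2 H))) t Ht)). Qed.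
Lemma st_gam M th : standing M th -> forall t, (t < hor M)%nat -> 0 <= gam M t.
Proof. intros H t Ht. destruct H as [_ [_ [_ [_ [_ [_ H]]]]]]. apply (H t Ht). Qed.
Lemma st_alp M th : standing M th -> 0 < alp M <= 1.
Proof. intros H; apply H. Qed.
Lemma st_th M th : standing M th -> 0 < th.
Proof. intros H; apply H. Qed.

Lemma Bd_mono M th s t y1 y2 : standing M th -> (t + 1 <= hor M)%nat -> y1 <= y2 ->
  0 <= Bd M th s t y1 <= Bd M th s t y2.
Proof.
  intros H Ht Hy. pose proof (st_th _ _ H). pose proof (st_alp _ _ H).
  assert (0 <= gam M t) by (apply (st_gam _ _ H); lia).
  unfold Bd.
  assert (A: forall n, (1 <= n <= hor M - 1 - t)%nat ->
    0 <= alp M ^ n * gam M (t + n) * prodN 0 (n - 1) (fun m => FF M (t + m) (y1 + INR (m + 1) * th - sx M th s (t + m + 1)))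
    <= alp M ^ n * gam M (t + n) * prodN 0 (n - 1) (fun m => FF M (t + m) (y2 + INR (m + 1) * th - sx M th s (t + m + 1)))).
  { intros n Hn.
    assert (0 <= alp M ^ n * gam M (t + n)).
    { apply Rmult_le_pos. apply pow_le; lra. apply (st_gam _ _ H); lia. }
    destruct (prodN_le (n - 1) (fun m => FF M (t + m) (y1 + INR (m + 1) * th - sx M th s (t + m + 1)))
       (fun m => FF M (t + m) (y2 + INR (m + 1) * th - sx M th s (t + m + 1)))).
    { intros m Hm. assert (HF: is_cdf_nonneg (FF M (t+m))) by (apply (st_F _ _ H); lia).
      split. apply (cdf_bounds _ HF). apply (cdf_mono _ HF). lra. }
    split. apply Rmult_le_pos; auto. apply Rmult_le_compat_l; auto. }
  assert (0 <= sumN 1 (hor M - 1 - t) (fun n => alp M ^ n * gam M (t + n) *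
    prodN 0 (n - 1) (fun m => FF M (t + m) (y1 + INR (m + 1) * th - sx M th s (t + m + 1))))).
  { apply sumN_nonneg. intros; apply A; auto. }
  assert (sumN 1 (hor M - 1 - t) (fun n => alp M ^ n * gam M (t + n) *
    prodN 0 (n - 1) (fun m => FF M (t + m) (y1 + INR (m + 1) * th - sx M th s (t + m + 1))))
    <= sumN 1 (hor M - 1 - t) (fun n => alp M ^ n * gam M (t + n) *
    prodN 0 (n - 1) (fun m => FF M (t + m) (y2 + INR (m + 1) * th - sx M th s (t + m + 1))))).
  { apply sumN_le. intros; apply A; auto. }
  split. apply Rplus_le_le_0_compat; [apply Rmult_le_pos; lra| apply Rmult_le_pos; lra].
  apply Rplus_le_compat_l. apply Rmult_le_compat_l; lra.
Qed.

Lemma Bd_rec M th s t y : (t + 2 <= hor M)%nat ->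
  Bd M th s t y = gam M t * th + alp M * FF M t (y + th - sx M th s (S t)) * Bd M th s (S t) (y + th).
Proof.
  intros Ht. unfold Bd.
  replace (hor M - 1 - t)%nat with (S (hor M - 1 - S t)) by lia.
  rewrite sumN_1S.
  rewrite (sumN_ext 1 (hor M - 1 - S t) _ (fun n => alp M * FF M t (y + th - sx M th s (S t)) *
      (alp M ^ n * gam M (S t + n) * prodN 0 (n - 1) (fun m => FF M (S t + m)
        (y + th + INR (m + 1) * th - sx M th s (S t + m + 1)))))).
  2:{ intros n Hn. replace (S n - 1)%nat with (S (n - 1)) by lia. rewrite prodN_0S.
      replace (t + 0)%nat with t by lia. replace (t + 0 + 1)%nat with (S t) by lia.
      rewrite (prodN_ext (n - 1) (fun m : nat => FF M (t + S m) (y + INR (S m + 1) * th - sx M th s (t + S m + 1)))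
          (fun m => FF M (S t + m) (y + th + INR (m + 1) * th - sx M th s (S t + m + 1)))).
      2:{ intros m _. replace (t + S m)%nat with (S t + m)%nat by lia.
          replace (t + S m + 1)%nat with (S t + m + 1)%nat by lia. f_equal.
          rewrite !plus_INR, S_INR. simpl. ring. }
      replace (t + S n)%nat with (S t + n)%nat by lia. simpl. rewrite Nat.add_1_r, Rmult_1_l. ring. }
  rewrite sumN_scal. rewrite prodN_00.
  replace (t + 0)%nat with t by lia. replace (t + 0 + 1)%nat with (S t) by lia.
  replace (t + 1)%nat with (S t) by lia. simpl. rewrite Rmult_1_l. ring.
Qed.

Lemma isg_sub th y m : isg th y -> isg th (y - z th m).
Proof. intros [j ->]. exists (j - m)%Z. apply z_sub. Qed.

Lemma main M th s : standing M th -> forall k t, (t + k + 1 = hor M)%nat -> forall y, isg th y ->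
  phibar M th s t th y <= Bd M th s t y /\
  ((t + 2 <= hor M)%nat -> psibar M th s t th y <= Bd M th s t y).
Proof.
  intros H. pose proof (st_th _ _ H) as Hth. pose proof (st_alp _ _ H) as Hal.
  induction k as [|k IH]; intros t Htk y Hy.
  - split; [|intros; lia].
    replace t with (hor M - 1)%nat by lia. rewrite phibar_last.
    destruct (Rlt_dec _ _).
    + apply (Bd_mono M th s (hor M - 1) y y H); try lia; lra.
    + unfold Bd. replace (hor M - 1 - (hor M - 1))%nat with 0%nat by lia.
      unfold sumN. simpl. lra.
  - assert (Ht2 : (t + 2 <= hor M)%nat) by lia.
    assert (Hps : forall y, isg th y -> psibar M th s t th y <= Bd M th s t y).
    { clear y Hy. intros y Hy.
      pose proof (Bd_mono M th s (S t) (y + th) (y + th) H ltac:(lia) (Rle_refl _)) as [B0 _].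
      assert (HF: is_cdf_nonneg (FF M t)) by (apply (st_F _ _ H); lia).
      pose proof (cdf_bounds _ HF (y + th - sx M th s (S t))) as [F0 F1].
      assert (Hg: 0 <= gam M t) by (apply (st_gam _ _ H); lia).
      rewrite psibar_eq by lia. rewrite Bd_rec by lia.
      destruct (Rlt_dec _ _) as [Hlt|Hge].
      + assert (0 <= alp M * FF M t (y + th - sx M th s (S t)) * Bd M th s (S t) (y + th)).
        { apply Rmult_le_pos; [apply Rmult_le_pos|]; lra. }
        lra.
      + set (n := nidx th y (sx M th s (S t))).
        pose proof (nidx_spec th y (sx M th s (S t)) Hth) as [N1 N2]. fold n in N1, N2.
        assert (Hn : (0 <= n)%Z).
        { assert (z th (-1) < z th n) by (unfold z in *; simpl in *; lra).
          unfold z in H0. apply Rmult_lt_reg_r in H0; [|lra]. apply lt_IZR in H0. lia. }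
        set (B := Bd M th s (S t) (y + th)).
        assert (Hs : sumZ (-1) (n - 1) (fun m => phibar M th s (S t) th (y - z th m) * Defs.f M th t m)
                     <= sumZ (-1) (n - 1) (fun m => B * Defs.f M th t m)).
        { apply sumZ_le. intros m Hm.
          assert (0 <= Defs.f M th t m).
          { unfold Defs.f. pose proof (cdf_mono _ HF (z th m) (z th (m + 1))).
            rewrite z_add1 in *. lra. }
          apply Rmult_le_compat_r; auto.
          destruct (IH (S t) ltac:(lia) (y - z th m) (isg_sub _ _ _ Hy)) as [P _].
          eapply Rle_trans; [exact P|].
          apply (Bd_mono M th s (S t) _ _ H); [lia|].
          assert (-1 <= IZR m) by (apply IZR_le; lia). unfold z. nra. }
        rewrite sumZ_scal in Hs. unfold Defs.f in Hs.
        rewrite (sumZ_tele (fun m => FF M t (z th m)) n Hn) in Hs.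
        assert (FF M t (z th (-1)) = 0).
        { destruct HF as [_ [_ [_ Hneg]]]. apply Hneg. unfold z. simpl. lra. }
        assert (FF M t (z th n) <= FF M t (y + th - sx M th s (S t))).
        { apply (cdf_mono _ HF). replace n with (n - 1 + 1)%Z at 1 by lia. rewrite z_add1. lra. }
        assert (0 <= FF M t (z th n)) by apply (cdf_bounds _ HF).
        assert (alp M * sumZ (-1) (n - 1) (fun m => phibar M th s (S t) th (y - z th m) * Defs.f M th t m)
                <= alp M * FF M t (y + th - sx M th s (S t)) * B).
        { rewrite Rmult_assoc. apply Rmult_le_compat_l; [lra|].
          eapply Rle_trans; [exact Hs|]. rewrite H0, Rminus_0_r.
          unfold B. nra. }
        lra. }
    split; [|intros; apply Hps; auto].
    rewrite phibar_eq by lia.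
    destruct (Rlt_dec _ _) as [_|Hn1].
    + apply (Bd_mono M th s t y y H); try lia; lra.
    + destruct (Rlt_dec _ _) as [Hl|Hn2]; [|apply Hps; auto].
      destruct (sx_grid M th s t ltac:(lia)) as [a Ha].
      destruct Hy as [b Hb].
      assert (E : y = sx M th s t).
      { rewrite Ha, Hb. apply grid_eq; auto. rewrite <- Ha, <- Hb. lra. }
      replace (y - sx M th s t + th) with th by lra. apply Hps. exists b; auto.
Qed.

Lemma lam_grid M th s t x : isg th x -> forall i, (t + i + 1 <= hor M)%nat -> isg th (lam M th s t x i).
Proof.
  intros Hx. induction i as [|i IH]; intros Hi; simpl; auto.
  assert (isg th (Rmax (lam M th s t x i) (Sx M th s (t + i)))).
  { apply Rmax_case; [apply IH; lia| apply Sx_grid; lia]. }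
  destruct H as [j Hj]. exists (j + 1)%Z. rewrite z_add1. lra.
Qed.

Theorem theorem4p5 (M : model) (theta sT1 : R) :
  standing M theta -> sT1_ok M sT1 -> expectations_finite M theta sT1 ->
  (3 <= hor M)%nat ->
  forall (k : Z) (t : nat), (t <= hor M - 3)%nat ->
    epsbar M theta sT1 t (z theta k) <= Ueps M theta sT1 t (z theta k) /\
    Ueps M theta sT1 t (z theta k) <= Ubar M theta t.
Proof.
  intros H _ _ H3 k t Ht.
  pose proof (st_th _ _ H) as Hth. pose proof (st_alp _ _ H) as Hal.
  split.
  - unfold epsbar, Ueps.
    replace (Nat.eqb t (hor M - 2)) with false by (symmetry; apply Nat.eqb_neq; lia).
    apply Rplus_le_compat_l. rewrite <- sumN_scal. apply sumN_le. intros i Hi.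
    set (Y := Rmax (lam M theta sT1 t (z theta k) i) (Sx M theta sT1 (t + i))).
    assert (HY : isg theta Y).
    { unfold Y. apply Rmax_case; [apply lam_grid; [exists k; auto|lia]| apply Sx_grid; lia]. }
    destruct (main M theta sT1 H (hor M - 1 - (t + i)) (t + i) ltac:(lia) Y HY) as [_ P].
    specialize (P ltac:(lia)). unfold Bd in P.
    replace (hor M - 1 - t - i)%nat with (hor M - 1 - (t + i))%nat by lia.
    rewrite (sumN_ext 1 _ _ (fun n => alp M ^ i * (alp M ^ n * gam M (t + i + n) *
         prodN 0 (n - 1) (fun m => FF M (t + i + m) (Y + INR (m + 1) * theta - sx M theta sT1 (t + i + m + 1)))))).
    2:{ intros n _. rewrite pow_add. ring. }
    rewrite sumN_scal.
    assert (0 <= alp M ^ i) by (apply pow_le; lra).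
    nra.
  - unfold Ueps, Ubar. apply Rplus_le_compat_l. apply Rmult_le_compat_l; [lra|].
    apply sumN_le. intros i Hi. apply sumN_le. intros n Hn.
    assert (0 <= alp M ^ (n + i) * gam M (t + i + n)).
    { apply Rmult_le_pos. apply pow_le; lra. apply (st_gam _ _ H); lia. }
    assert (prodN 0 (n - 1) (fun m => FF M (t + i + m)
       (Rmax (lam M theta sT1 t (z theta k) i) (Sx M theta sT1 (t + i)) + INR (m + 1) * theta
        - sx M theta sT1 (t + i + m + 1))) <= 1).
    { apply prodN_le1. intros m Hm. apply cdf_bounds. apply (st_F _ _ H). lia. }
    nra.
Qed.
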